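(* Let $n$ be a positive integer. Then $V(n,2)\neq\emptyset$ if and only if $n=4k$ or $n=4k+1$ for some positive integer $k$.
   Context: Let $S=K[x_1,\ldots,x_n]$ over a field $K$. $V(n,2)$ is the set of $f$-ideals of $S$ of degree $2$, i.e. square-free monomial ideals $I$ all of whose minimal monomial generators have degree $2$ and which are $f$-ideals. Here, with $\sigma$ the bijection $x_{i_1}\cdots x_{i_k}\mapsto\{i_1,\ldots,i_k\}$ from square-free monomials to subsets of $[n]$, the facet complex $\delta_{\mathcal{F}}(I)$ is the simplicial complex with facets $\sigma(g)$ for $g$ in the minimal generating set $G(I)$, the Stanley–Reisner complex is $\delta_{\mathcal{N}}(I)=\{\sigma(g)\mid g \text{ square-free monomial},\ g\notin I\}$, and $I$ is an $f$-ideal if these two complexes have the same $f$-vector. *)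

(* Defs.v *)
From mathcomp Require Import all_boot all_algebra.
Set Implicit Arguments. Unset Strict Implicit. Unset Printing Implicit Defensive.

(* Square-free monomials of S = K[x_1,...,x_n] are identified with subsets of
   [n] = 'I_n via sigma : x_{i1}...x_{ik} |-> {i1,...,ik}.
   A square-free monomial ideal I is encoded by (the sigma-image of) its
   minimal monomial generating set G(I) : {set {set 'I_n}}, an antichain. *)

Definition antichain n (G : {set {set 'I_n}}) : Prop :=
  forall g h, g \in G -> h \in G -> g \subset h -> g = h.

(* The square-free monomial with support F lies in I iff some minimal
   generator divides it. *)
Definition sqfree_in_ideal n (G : {set {set 'I_n}}) (F : {set 'I_n}) : bool :=
  [exists g in G, g \subset F].

Definition facet_complex n (G : {set {set 'I_n}}) : {set {set 'I_n}} :=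
  [set F : {set 'I_n} | [exists g in G, F \subset g]].

Definition SR_complex n (G : {set {set 'I_n}}) : {set {set 'I_n}} :=
  [set F : {set 'I_n} | ~~ sqfree_in_ideal G F].

(* number of faces with k vertices (= f_{k-1}) *)
Definition fcount n (D : {set {set 'I_n}}) (k : nat) : nat :=
  #|[set F in D | #|F| == k]|.

Definition same_fvector n (D1 D2 : {set {set 'I_n}}) : Prop :=
  forall k, fcount D1 k = fcount D2 k.

Definition is_f_ideal n (G : {set {set 'I_n}}) : Prop :=
  same_fvector (facet_complex G) (SR_complex G).

Definition in_V2 n (G : {set {set 'I_n}}) : Prop :=
  antichain G /\ (forall g, g \in G -> #|g| = 2) /\ is_f_ideal G.

(* Main.v *)
Require Import Defs.
From mathcomp Require Import all_boot all_algebra.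
From mathcomp Require Import zify.
Set Implicit Arguments. Unset Strict Implicit.

Lemma card_lt n m : m <= n -> #|[set i : 'I_n | i < m]| = m.
Proof.
move=> hm.
have -> : [set i : 'I_n | i < m] = widen_ord hm @: [set: 'I_m].
  apply/setP => i; rewrite inE; apply/idP/imsetP => [lt | [j _ ->]]; last by case: j.
  by exists (Ordinal lt) => //; apply/val_inj.
rewrite card_imset; first by rewrite cardsT card_ord.
by move=> a b /(congr1 val) /= h; apply/val_inj.
Qed.

Lemma card_int n a b : a <= b -> b <= n ->
  #|[set i : 'I_n | a <= i < b]| = b - a.
Proof.
move=> hab hb.
have -> : [set i : 'I_n | a <= i < b] = [set i : 'I_n | i < b] :\: [set i : 'I_n | i < a].
  by apply/setP => i; rewrite !inE -leqNgt andbC.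
rewrite cardsDS ?card_lt //; first lia.
by apply/subsetP => i; rewrite !inE => h; lia.
Qed.

Lemma bin2E m : 'C(m, 2) * 2 = m * m.-1.
Proof. by rewrite mulnC -[2]/(1.+1) -mul_bin_diag bin1. Qed.

Section Gen.
Variable n : nat.
Variable G : {set {set 'I_n}}.
Hypothesis G2 : forall g, g \in G -> #|g| = 2.

Lemma facet2 : [set F in facet_complex G | #|F| == 2] = G.
Proof.
apply/setP => F; rewrite !inE; apply/idP/idP.
  case/andP => /existsP [g /andP [gG Fg]] /eqP F2.
  have : F == g by rewrite eqEcard Fg G2 // F2.
  by move/eqP ->.
move=> FG; rewrite G2 // andbT; apply/existsP; exists F; by rewrite FG subxx.
Qed.

Lemma SR2 : [set F in SR_complex G | #|F| == 2] = [set F : {set 'I_n} | #|F| == 2] :\: G.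
Proof.
apply/setP => F; rewrite !inE /sqfree_in_ideal andbC; case: eqP => //= F2.
rewrite andbT.
apply/idP/idP.
  by apply: contra => FG; apply/existsP; exists F; rewrite FG subxx.
apply: contra => /existsP [g /andP [gG gF]].
have : g == F by rewrite eqEcard gF (G2 gG) F2.
by move/eqP <-.
by rewrite andbF.
Qed.

Lemma count2 : fcount (facet_complex G) 2 = fcount (SR_complex G) 2 <->
   #|G| * 2 = 'C(n, 2).
Proof.
rewrite /fcount facet2 SR2 cardsDS; last first.
  by apply/subsetP => g gG; rewrite inE G2.
rewrite card_draws card_ord.
have : #|G| <= 'C(n,2).
  have := card_draws 'I_n 2; rewrite card_ord => <-; apply: subset_leq_card.
  by apply/subsetP => g gG; rewrite inE G2.
split; lia.
Qed.

Lemma SR_small (F : {set 'I_n}) : #|F| <= 1 -> F \in SR_complex G.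
Proof.
move=> h; rewrite inE; apply/existsP => [[g /andP [gG gF]]].
by have := subset_leq_card gF; rewrite (G2 gG); lia.
Qed.

Lemma facet_le2 (F : {set 'I_n}) : F \in facet_complex G -> #|F| <= 2.
Proof.
by rewrite inE => /existsP [g /andP [gG Fg]]; rewrite -(G2 gG) subset_leq_card.
Qed.

End Gen.

Lemma arith n g : 0 < g -> g * 4 = n * n.-1 -> exists k, 0 < k /\ (n = 4 * k \/ n = 4 * k + 1).
Proof.
move=> g0 h.
have hn := divn_eq n 4; have hr := ltn_pmod n (isT : 0 < 4).
move: (n %/ 4) (n %% 4) hn hr => q r hn hr; subst n.
case: r hr h => [|[|[|[|r]]]] // _ h.
- exists q; split; last by left; lia.
  case: q h => //; nia.
- exists q; split; last by right; lia.
  case: q h => //; nia.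
- exfalso. rewrite -subn1 in h. nia.
- exfalso. rewrite -subn1 in h. nia.
Qed.

Lemma other_elt n (S : {set 'I_n}) x : 1 < #|S| -> x \in S -> exists y, y \in S /\ y != x.
Proof.
move=> h xS; have := cardsD1 x S; rewrite xS => e.
have : S :\ x != set0 by rewrite -card_gt0; lia.
case/set0Pn => y; rewrite !inE => /andP [yx yS]; by exists y.
Qed.

Lemma pair_in n (S T : {set 'I_n}) : 1 < #|S :&: T| ->
  exists g : {set 'I_n}, [/\ g \subset S, g \subset T & #|g| = 2].
Proof.
case/card_gt1P => x [y [xS yS xy]].
exists [set x; y]; rewrite cards2 xy; split => //;
  apply/subsetP => z; rewrite !inE => /orP [] /eqP ->;
  by move: xS yS; rewrite !inE => /andP [? ?] /andP [? ?].
Qed.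

Lemma nec n (hn : 0 < n) (G : {set {set 'I_n}}) : in_V2 G ->
  exists k, 0 < k /\ (n = 4 * k \/ n = 4 * k + 1).
Proof.
case=> _ [G2 hf].
have hc := (count2 G2).1 (hf 2).
have G0 : 0 < #|G|.
  have := hf 0; rewrite /fcount => e.
  have : 0 < #|[set F in SR_complex G | #|F| == 0]|.
    rewrite card_gt0; apply/set0Pn; exists set0; rewrite !inE cards0 eqxx andbT.
    by have := @SR_small _ _ G2 set0; rewrite cards0 inE; apply.
  rewrite -e card_gt0 => /set0Pn [F]; rewrite !inE => /andP [/existsP [g /andP [gG _]] _].
  by rewrite card_gt0; apply/set0Pn; exists g.
apply: (arith G0); rewrite -bin2E -hc; lia.
Qed.

Section Constr.
Variables (n k : nat).
Hypothesis (hn : 0 < n) (k0 : 0 < k) (hnk : n = 4 * k \/ n = 4 * k + 1).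

Definition vv : 'I_n := Ordinal hn.
Definition AA := [set i : 'I_n | i < 2 * k].
Definition BB := ~: AA.
Definition B0 := [set i : 'I_n | 2 * k <= i < 3 * k].
Definition P1 := [set F : {set 'I_n} | F \subset AA & #|F| == 2].
Definition P2 := [set F : {set 'I_n} | F \subset BB & #|F| == 2].
Definition P3 := [set [set vv; b] | b in B0].
Definition GG := P1 :|: P2 :|: P3.

Lemma cardA : #|AA| = 2 * k.
Proof. by rewrite card_lt //; case: hnk => ->; lia. Qed.
Lemma cardB : #|BB| = n - 2 * k.
Proof. by rewrite /BB cardsCs setCK card_ord cardA. Qed.
Lemma cardB0 : #|B0| = k.
Proof. rewrite card_int; first lia; first lia. by case: hnk => ->; lia. Qed.

Lemma vA : vv \in AA.
Proof. by rewrite inE /=; lia. Qed.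

Lemma B0B b : b \in B0 -> b \in BB.
Proof. by rewrite !inE -leqNgt => /andP []. Qed.

Lemma vb b : b \in B0 -> vv != b.
Proof. by move/B0B; apply: contraTneq => <-; rewrite inE vA. Qed.

Lemma GG2 g : g \in GG -> #|g| = 2.
Proof.
rewrite !inE => /orP [/orP [] | ] ; first by case/andP => _ /eqP.
  by case/andP => _ /eqP.
by case/imsetP => b bB ->; rewrite cards2 vb.
Qed.

Lemma cardP3 : #|P3| = k.
Proof.
rewrite card_in_imset ?cardB0 // => b1 b2 h1 h2 e.
have : b1 \in [set vv; b2] by rewrite -e set22.
rewrite !inE => /orP [/eqP bv | /eqP //].
by move: (vb h1); rewrite bv eqxx.
Qed.

Lemma cardG : #|GG| = 'C(2 * k, 2) + 'C(n - 2 * k, 2) + k.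
Proof.
rewrite /GG cardsU cardsU.
have -> : P1 :&: P2 = set0.
  apply/setP => F; rewrite !inE.
  apply/negP => /andP [/andP [FA /eqP F2] /andP [FB _]].
  have : F == set0.
    rewrite -subset0; apply/subsetP => x xF.
    by move: (subsetP FA x xF) (subsetP FB x xF); rewrite !inE => ->.
  by move/eqP => F0; move: F2; rewrite F0 cards0.
have -> : (P1 :|: P2) :&: P3 = set0.
  apply/setP => F; rewrite !inE; apply/negP => /andP [h /imsetP [b bB eF]].
  subst F; case/orP: h => /andP [S _].
    by move: (B0B bB) (subsetP S b (set22 _ _)); rewrite !inE => h1 h2; rewrite h2 in h1.
  by move: vA (subsetP S vv (set21 _ _)); rewrite !inE => h1 h2; rewrite h1 in h2.
rewrite !cards0 !subn0 cardP3 /P1 /P2 !cards_draws cardA cardB //.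
Qed.

Lemma countG : #|GG| * 2 = 'C(n, 2).
Proof.
have e1 := bin2E (2 * k); have e2 := bin2E (n - 2 * k); have e3 := bin2E n.
rewrite cardG.
rewrite -subn1 in e1 e2 e3.
case: hnk => hh; subst n; nia.
Qed.

Lemma coverG (x : 'I_n) : exists g, g \in GG /\ x \in g.
Proof.
case xA: (x \in AA).
  have [|y [yA yx]] := other_elt _ xA; first by rewrite cardA; lia.
  exists [set x; y]; split; last by rewrite set21.
  have xy : x != y by rewrite eq_sym.
  rewrite !inE; apply/orP; left; apply/orP; left; rewrite cards2 xy andbT.
  by apply/subsetP => z; rewrite in_set2 => /orP [] /eqP ->.
have xB : x \in BB by rewrite inE xA.
have [|y [yB yx]] := other_elt _ xB; first by rewrite cardB; case: hnk => ->; lia.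
exists [set x; y]; split; last by rewrite set21.
have xy : x != y by rewrite eq_sym.
  rewrite !inE; apply/orP; left; apply/orP; right; rewrite cards2 xy andbT.
by apply/subsetP => z; rewrite in_set2 => /orP [] /eqP ->.
Qed.

Lemma split3 a b c : 2 < c -> a + b = c -> 1 < a \/ 1 < b.
Proof. lia. Qed.

Lemma tripleG (F : {set 'I_n}) : 2 < #|F| -> exists2 g, g \in GG & g \subset F.
Proof.
move=> h; have := cardsID AA F; rewrite setDE => e.
have [h1|h1] := split3 h e.
  have [g [gF gA g2]] := pair_in h1.
  exists g => //; rewrite !inE gA g2 eqxx.
  by [].
have [g [gF gA g2]] := pair_in h1.
exists g => //; rewrite !inE gA g2 eqxx orbT.
by [].
Qed.

Lemma GV2 : in_V2 GG.
Proof.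
split.
  move=> g h gG hG gh; apply/eqP; by rewrite eqEcard gh (GG2 gG) (GG2 hG).
split; first exact: GG2.
move=> j.
case: (eqVneq j 2) => [->|j2]; first by apply/(count2 GG2); exact: countG.
rewrite /fcount; apply: eq_card => F; rewrite !inE.
case: eqP => // Fj; rewrite ?andbT ?andbF //=.
have [le1|gt1] := leqP #|F| 1.
  have := SR_small GG2 le1; rewrite inE => ->; apply/existsP.
  move: le1; rewrite leq_eqVlt ltnS leqn0 => /orP [/cards1P [x ->] | /eqP/cards0_eq ->].
    have [g [gG xg]] := coverG x; exists g; by rewrite gG sub1set.
  have [g [gG _]] := coverG vv; exists g; by rewrite gG sub0set.
have gt2 : 2 < #|F| by rewrite -Fj in j2; lia.
apply/idP/idP.
  by move=> hF; have := @facet_le2 _ _ GG2 F; rewrite inE => /(_ hF); lia.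
by move/negP; case; have [g gG gF] := tripleG gt2; apply/existsP; exists g; rewrite gG.
Qed.

End Constr.

Theorem proposition3p3 (K : fieldType) (n : nat) (hn : 0 < n) :
  (exists G : {set {set 'I_n}}, in_V2 G) <->
  (exists k : nat, 0 < k /\ (n = 4 * k \/ n = 4 * k + 1)).
Proof.
split; first by case=> G hG; exact: (nec hn hG).
case=> k [k0 hnk]; exists (@GG n k hn); exact: GV2.
Qed.
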